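(* Let $F$ be the 0-1 loss $F(z)=\mathbb{1}(z<0)$, the hinge loss $F(z)=(1-z)_+$, or the psi-loss $F(z)=2\min(1,(1-z)_+)$. Let $(\boldsymbol X_i,Y_i)_{i\in[n]}$ be an arbitrary sample with $\boldsymbol X_i\in\mathbb{R}^{d_1\times d_2}$, $\|\boldsymbol X_i\|_F\le1$, $Y_i\in\mathbb{R}$, and let $\pi\in\mathbb{R}$, $\lambda\ge0$. Consider $$\min_{(\boldsymbol B,b):\ \mathrm{rank}(\boldsymbol B)\le r,\ \mathrm{supp}(\boldsymbol B)\le(s_1,s_2)}\ \frac1n\sum_{i=1}^n|Y_i-\pi|\,F\big([\langle\boldsymbol X_i,\boldsymbol B\rangle+b]\,\mathrm{sgn}(Y_i-\pi)\big)+\lambda\|\boldsymbol B\|_F^2 .$$ If this problem admits a global optimizer, then there exists a global optimizer $(\boldsymbol B_{\mathrm{opt}},b_{\mathrm{opt}})$ with $|b_{\mathrm{opt}}|\le\|\boldsymbol B_{\mathrm{opt}}\|_F+1$.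
   Context: $\mathrm{sgn}(x)=1$ if $x>0$, $-1$ otherwise. $\langle\boldsymbol X,\boldsymbol B\rangle=\mathrm{tr}(\boldsymbol X\boldsymbol B^T)$. $\mathrm{supp}(\boldsymbol B)\le(s_1,s_2)$ means $\boldsymbol B$ has at most $s_1$ nonzero rows and at most $s_2$ nonzero columns. $z_+=\max(z,0)$. *)

(* Defs.v *)
From HB Require Import structures.
From mathcomp Require Import all_boot all_order all_algebra.
Set Implicit Arguments. Unset Strict Implicit. Unset Printing Implicit Defensive.
Import Order.TTheory GRing.Theory Num.Theory.
Local Open Scope ring_scope.

Section Defs.
Variable R : rcfType.

Definition sgn (x : R) : R := if 0 < x then 1 else -1.

Definition frob_inner (d1 d2 : nat) (X B : 'M[R]_(d1, d2)) : R := \tr (X *m B^T).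

Definition frob_norm (d1 d2 : nat) (B : 'M[R]_(d1, d2)) : R :=
  Num.sqrt (\sum_(i < d1) \sum_(j < d2) B i j ^+ 2).

Definition supp_le (d1 d2 : nat) (B : 'M[R]_(d1, d2)) (s1 s2 : nat) : bool :=
  (#|[set i : 'I_d1 | row i B != 0%R]| <= s1)%N &&
  (#|[set j : 'I_d2 | col j B != 0%R]| <= s2)%N.

Inductive loss_kind := ZeroOne | Hinge | PsiLoss.

Definition lossF (k : loss_kind) (z : R) : R :=
  match k with
  | ZeroOne => if z < 0 then 1 else 0
  | Hinge => Num.max (1 - z) 0
  | PsiLoss => 2 * Num.min 1 (Num.max (1 - z) 0)
  end.

Definition feasible (d1 d2 r s1 s2 : nat) (B : 'M[R]_(d1, d2)) : Prop :=
  (\rank B <= r)%N /\ supp_le B s1 s2.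

Definition objective (k : loss_kind) (n d1 d2 : nat)
  (X : 'I_n -> 'M[R]_(d1, d2)) (Y : 'I_n -> R) (pi lambda : R)
  (B : 'M[R]_(d1, d2)) (b : R) : R :=
  n%:R^-1 * (\sum_(i < n) `|Y i - pi| * lossF k ((frob_inner (X i) B + b) * sgn (Y i - pi)))
  + lambda * frob_norm B ^+ 2.

Definition is_global_opt (k : loss_kind) (n d1 d2 r s1 s2 : nat)
  (X : 'I_n -> 'M[R]_(d1, d2)) (Y : 'I_n -> R) (pi lambda : R)
  (B : 'M[R]_(d1, d2)) (b : R) : Prop :=
  feasible r s1 s2 B /\
  forall (B' : 'M[R]_(d1, d2)) (b' : R), feasible r s1 s2 B' ->
    objective k X Y pi lambda B b <= objective k X Y pi lambda B' b'.
End Defs.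

(* Main.v *)
Require Import Defs.
From HB Require Import structures.
From mathcomp Require Import all_boot all_order all_algebra.
From mathcomp Require Import ring lra.
Import Order.TTheory GRing.Theory Num.Theory.
Local Open Scope ring_scope.

Lemma lossF_anti (R : rcfType) k (z z' : R) : z <= z' -> lossF k z' <= lossF k z.
Proof. move=> h; case: k => /=.
- by case: (ltP z' 0) => ?; case: (ltP z 0) => ? //; lra.
- rewrite /Num.max /Order.max.
  by case: (ltP (1 - z') 0) => ?; case: (ltP (1 - z) 0) => ?; lra.
- rewrite /Num.max /Num.min /Order.max /Order.min.
  case: (ltP (1 - z') 0) => ?; case: (ltP (1 - z) 0) => ?; 
  case: (ltP 1 (0:R)) => ?; try case: (ltP 1 (1 - z)) => ?; try case: (ltP 1 (1 - z')) => ?; lra.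
Qed.
Lemma lossF_one (R : rcfType) k (z : R) : 1 <= z -> lossF k z = 0.
Proof. move=> h; case: k => /=.
- by case: (ltP z 0) => ? //; lra.
- rewrite /Num.max /Order.max.
  by case: (ltP (1 - z) 0) => ?; lra.
- rewrite /Num.max /Num.min /Order.max /Order.min.
  case: (ltP (1 - z) 0) => ?; case: (ltP 1 (0:R)) => ?; try case: (ltP 1 (1 - z)) => ?; lra.
Qed.
Lemma lossF_ge0 (R : rcfType) k (z : R) : 0 <= lossF k z.
Proof. case: k => /=.
- by case: (ltP z 0) => ? //; lra.
- rewrite /Num.max /Order.max.
  by case: (ltP (1 - z) 0) => ?; lra.
- rewrite /Num.max /Num.min /Order.max /Order.min.
  case: (ltP (1 - z) 0) => ?; case: (ltP 1 (0:R)) => ?; try case: (ltP 1 (1 - z)) => ?; lra.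
Qed.

Lemma key (R : rcfType) k (a b b' c s : R) : `|a| <= c -> (s = 1 \/ s = -1) ->
  (b' = b \/ (b' = c+1 /\ c+1 < b) \/ (b' = -(c+1) /\ b < -(c+1))) ->
  lossF k ((a+b')*s) <= lossF k ((a+b)*s).
Proof.
rewrite ler_norml => /andP[h1 h2] [->|->]; rewrite ?mulr1 ?mulrN1.
- case=> [->|[[-> h]|[-> h]]]; first exact: lexx.
  + rewrite lossF_one ?lossF_ge0 //; lra.
  + apply: lossF_anti; lra.
- case=> [->|[[-> h]|[-> h]]]; first exact: lexx.
  + apply: lossF_anti; lra.
  + rewrite lossF_one ?lossF_ge0 //; lra.
Qed.

Lemma dsum_lin (R : rcfType) (d1 d2 : nat) (a b : R) (f g h : 'I_d1 -> 'I_d2 -> R) :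
  \sum_i \sum_j (a * f i j + b * g i j + h i j) =
  a * (\sum_i \sum_j f i j) + b * (\sum_i \sum_j g i j) + \sum_i \sum_j h i j.
Proof.
rewrite !mulr_sumr -!big_split /=; apply eq_bigr => i _.
by rewrite !mulr_sumr -!big_split.
Qed.

Lemma inner_sum (R : rcfType) (d1 d2 : nat) (X B : 'M[R]_(d1, d2)) :
  frob_inner X B = \sum_i \sum_j X i j * B i j.
Proof.
rewrite /frob_inner /mxtrace; apply eq_bigr => i _; rewrite mxE.
by apply eq_bigr => j _; rewrite mxE.
Qed.

Lemma inner_bound (R : rcfType) (d1 d2 : nat) (X B : 'M[R]_(d1, d2)) :
  frob_norm X <= 1 -> `|frob_inner X B| <= frob_norm B.
Proof.
rewrite inner_sum /frob_norm => hX.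
set A := \sum_i \sum_j X i j ^+ 2.
set S := \sum_i \sum_j X i j * B i j.
set Q := \sum_i \sum_j B i j ^+ 2.
have A0 : 0 <= A by apply: sumr_ge0 => i _; apply: sumr_ge0 => j _; exact: sqr_ge0.
have Q0 : 0 <= Q by apply: sumr_ge0 => i _; apply: sumr_ge0 => j _; exact: sqr_ge0.
have A1 : A <= 1.
  have s0 := sqrtr_ge0 A; have := sqr_sqrtr A0; rewrite expr2 => e; nra.
set c := Num.sqrt Q.
have c0 : 0 <= c by exact: sqrtr_ge0.
have cQ : c ^+ 2 = Q by rewrite sqr_sqrtr.
have expand : forall t s : R, s ^+ 2 = 1 ->
   0 <= t ^+ 2 * A + (- (2 * t * s)) * S + Q.
  move=> t s hs.
  have <- : \sum_i \sum_j (t * X i j - s * B i j) ^+ 2 = t ^+ 2 * A + (- (2 * t * s)) * S + Q.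
    rewrite -dsum_lin; apply eq_bigr => i _; apply eq_bigr => j _.
    rewrite sqrrB !exprMn hs; ring.
  by apply: sumr_ge0 => i _; apply: sumr_ge0 => j _; exact: sqr_ge0.
have [cpos|cz] := ltP 0 c.
  have h1 := expand c 1 (expr1n R 2).
  have h2 := expand c (-1) ltac:(by rewrite sqrrN expr1n).
  rewrite -cQ in h1 h2.
  have hA : c ^+ 2 * A <= c ^+ 2 by rewrite -{2}(mulr1 (c ^+ 2)); apply: ler_wpM2l; rewrite ?sqr_ge0.
  have c2 : 0 < 2 * c by lra.
  rewrite ler_norml; apply/andP; split.
  - have : - c * (2 * c) <= S * (2 * c) by nra.
    by rewrite (ler_pM2r c2).
  - have : S * (2 * c) <= c * (2 * c) by nra.
    by rewrite (ler_pM2r c2).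
have Qz : Q = 0 by rewrite -cQ (_ : c = 0) ?expr0n //; lra.
have hB : forall i j, B i j = 0.
  move=> i j.
  have hi : \sum_j B i j ^+ 2 = 0.
    apply: (psumr_eq0P _ Qz) => // i' _.
    by apply: sumr_ge0 => j' _; exact: sqr_ge0.
  have : B i j ^+ 2 = 0.
    by apply: (psumr_eq0P _ hi) => // j' _; exact: sqr_ge0.
  by move/eqP; rewrite sqrf_eq0 => /eqP.
have -> : S = 0 by rewrite /S big1 // => i _; rewrite big1 // => j _; rewrite hB mulr0.
by rewrite normr0.
Qed.

Theorem lemma1 (R : rcfType) (k : loss_kind) (n d1 d2 r s1 s2 : nat)
  (X : 'I_n -> 'M[R]_(d1, d2)) (Y : 'I_n -> R) (pi lambda : R)
  (hX : forall i, frob_norm (X i) <= 1) (hlambda : 0 <= lambda) :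
  (exists (B : 'M[R]_(d1, d2)) (b : R), is_global_opt k r s1 s2 X Y pi lambda B b) ->
  exists (Bopt : 'M[R]_(d1, d2)) (bopt : R),
    is_global_opt k r s1 s2 X Y pi lambda Bopt bopt /\
    `|bopt| <= frob_norm Bopt + 1.
Proof.
move=> [B [b [feas opt]]].
set c := frob_norm B.
have c0 : 0 <= c by exact: sqrtr_ge0.
have [b' [hb' hcase]] : exists b', `|b'| <= c + 1 /\
   (b' = b \/ (b' = c+1 /\ c+1 < b) \/ (b' = -(c+1) /\ b < -(c+1))).
  case: (ltP (c + 1) b) => h1.
    exists (c + 1); split; last by right; left.
    by rewrite ger0_norm; lra.
  case: (ltP b (-(c + 1))) => h2.
    exists (-(c + 1)); split; last by right; right.
    by rewrite normrN ger0_norm; lra.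
  exists b; split; last by left.
  by rewrite ler_norml; apply/andP; split.
have hobj : objective k X Y pi lambda B b' <= objective k X Y pi lambda B b.
  rewrite /objective lerD2r; apply: ler_wpM2l; first by rewrite invr_ge0 ler0n.
  apply: ler_sum => i _; apply: ler_wpM2l; first exact: normr_ge0.
  apply: (@key R k _ b b' c) => //; first by apply: inner_bound; exact: hX.
  by rewrite /sgn; case: (0 < Y i - pi); [left|right].
exists B, b'; split => //; split => // B' b'' f'.
exact: le_trans hobj (opt B' b'' f').
Qed.
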